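(* Let $l:R\to S$ be a Frobenius extension of two-sided Noetherian rings such that ${}_RS_R$ is centrally projective over $R$, let $\omega$ be a finitely generated left $R$-module, and let $M$ be a left $S$-module with $M\in\mathrm{add}_S(S\otimes_R\omega)$. Then the underlying $R$-module ${}_RM$ lies in $\mathrm{add}_R\omega$.
   Context: A ring extension $S/R$ is a unital ring homomorphism $l:R\to S$; $S$-modules are $R$-modules by restriction. $S/R$ is a Frobenius extension if ${}_RS$ is finitely generated projective and ${}_SS_R\cong\mathrm{Hom}_R({}_RS_S,{}_RR_R)$ as $S$-$R$-bimodules. ${}_RS_R$ is centrally projective over $R$ if it is isomorphic as an $R$-$R$-bimodule to a direct summand of a finite direct sum of copies of ${}_RR_R$. For a module $W$ over a ring $A$, $\mathrm{add}_AW$ is the class of $A$-modules isomorphic to direct summands of finite direct sums of copies of $W$. $S\otimes_R\omega$ is a left $S$-module via $S$. *)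

(* Defs.v *)
From HB Require Import structures.
From mathcomp Require Import all_boot all_order all_algebra.
Set Implicit Arguments. Unset Strict Implicit. Unset Printing Implicit Defensive.
Import GRing.Theory.
Local Open Scope ring_scope.

Definition linear_wrt (A : pzRingType) (U V : zmodType)
  (aU : A -> U -> U) (aV : A -> V -> V) (f : U -> V) : Prop :=
  (forall x y, f (x - y) = f x - f y) /\ (forall a x, f (aU a x) = aV a (f x)).

Definition act_pow (A : Type) (W : zmodType) (n : nat) (aW : A -> W -> W)
  : A -> {ffun 'I_n -> W} -> {ffun 'I_n -> W} :=
  fun a v => [ffun j => aW a (v j)].

(* U lies in add_A W: U is isomorphic to a direct summand of W^n for some n,
   i.e. there are A-linear maps i : U -> W^n, p : W^n -> U with p \o i = id. *)
Definition in_add (A : pzRingType) (U W : zmodType)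
  (aU : A -> U -> U) (aW : A -> W -> W) : Prop :=
  exists n : nat, exists (i : U -> {ffun 'I_n -> W}) (p : {ffun 'I_n -> W} -> U),
    [/\ linear_wrt aU (@act_pow A W n aW) i, linear_wrt (@act_pow A W n aW) aU p
      & forall u, p (i u) = u].

Definition is_left_ideal (A : pzRingType) (I : A -> Prop) : Prop :=
  [/\ I 0, (forall x y, I x -> I y -> I (x - y)) & (forall r x, I x -> I (r * x))].
Definition is_right_ideal (A : pzRingType) (I : A -> Prop) : Prop :=
  [/\ I 0, (forall x y, I x -> I y -> I (x - y)) & (forall r x, I x -> I (x * r))].
Definition left_noetherian (A : pzRingType) : Prop :=
  forall I : nat -> A -> Prop, (forall n, is_left_ideal (I n)) ->
    (forall n x, I n x -> I n.+1 x) ->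
    exists N, forall m, (N <= m)%N -> forall x, I m x -> I N x.
Definition right_noetherian (A : pzRingType) : Prop :=
  forall I : nat -> A -> Prop, (forall n, is_right_ideal (I n)) ->
    (forall n x, I n x -> I n.+1 x) ->
    exists N, forall m, (N <= m)%N -> forall x, I m x -> I N x.
Definition noetherian (A : pzRingType) : Prop :=
  left_noetherian A /\ right_noetherian A.

(* Frobenius extension: _R S finitely generated projective (i.e. in add_R R),
   and _S S_R ~ Hom_R(_R S_S, _R R_R) as S-R-bimodules, where
   (s.phi)(x) = phi(x s) and (phi.r)(x) = phi(x) r. *)
Definition left_R_linear (R S : pzRingType) (l : {rmorphism R -> S})
  (phi : S -> R) : Prop :=
  (forall x y, phi (x - y) = phi x - phi y) /\ (forall r x, phi (l r * x) = r * phi x).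

Definition frobenius (R S : pzRingType) (l : {rmorphism R -> S}) : Prop :=
  in_add (fun r (s : S) => l r * s) (fun r (x : R) => r * x) /\
  exists theta : S -> S -> R,
    (forall x, left_R_linear l (theta x)) /\
    [/\ forall x y, theta (x - y) = (fun z => theta x z - theta y z),
        forall s x, theta (s * x) = (fun z => theta x (z * s)),
        forall x r, theta (x * l r) = (fun z => theta x z * r),
        injective theta
      & forall phi, left_R_linear l phi -> exists x, theta x = phi].

Definition bilinear_pow (R S : pzRingType) (l : {rmorphism R -> S}) (n : nat)
  (f : S -> {ffun 'I_n -> R}) : Prop :=
  (forall x y, f (x - y) = f x - f y) /\
  (forall r r' x, f (l r * x * l r') = [ffun j => r * f x j * r']).
Definition bilinear_pow_inv (R S : pzRingType) (l : {rmorphism R -> S}) (n : nat)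
  (g : {ffun 'I_n -> R} -> S) : Prop :=
  (forall x y, g (x - y) = g x - g y) /\
  (forall r r' (v : {ffun 'I_n -> R}), g [ffun j => r * v j * r'] = l r * g v * l r').
Definition centrally_projective (R S : pzRingType) (l : {rmorphism R -> S}) : Prop :=
  exists n (i : S -> {ffun 'I_n -> R}) (p : {ffun 'I_n -> R} -> S),
    [/\ bilinear_pow l i, bilinear_pow_inv l p & forall s, p (i s) = s].

Definition fin_gen (R : pzRingType) (W : lmodType R) : Prop :=
  exists n (g : 'I_n -> W), forall w, exists c : 'I_n -> R,
    w = \sum_(j < n) c j *: g j.

Definition balanced (R S : pzRingType) (l : {rmorphism R -> S}) (W : lmodType R)
  (A : zmodType) (b : S -> W -> A) : Prop :=
  [/\ forall s s' w, b (s - s') w = b s w - b s' w,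
      forall s w w', b s (w - w') = b s w - b s w'
    & forall s r w, b (s * l r) w = b s (r *: w)].

(* (T, tau) is the tensor product S (x)_R W, as a left S-module
   (defined by its universal property). *)
Definition is_tensor (R S : pzRingType) (l : {rmorphism R -> S}) (W : lmodType R)
  (T : lmodType S) (tau : S -> W -> T) : Prop :=
  [/\ balanced l tau,
      forall s s' w, tau (s * s') w = s *: tau s' w
    & forall (A : zmodType) (b : S -> W -> A), balanced l b ->
        exists g : T -> A,
          [/\ forall x y, g (x - y) = g x - g y,
              forall s w, g (tau s w) = b s w
            & forall g' : T -> A, (forall x y, g' (x - y) = g' x - g' y) ->
                (forall s w, g' (tau s w) = b s w) -> forall t, g' t = g t]].

(* Main.v *)
Require Import Defs.
From HB Require Import structures.
From mathcomp Require Import all_boot all_order all_algebra.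
Import GRing.Theory.
Local Open Scope ring_scope.

Lemma ffB (I : finType) (W : zmodType) (f g : {ffun I -> W}) x :
  (f - g) x = f x - g x.
Proof. by rewrite !ffunE. Qed.

Lemma add_trans (A : pzRingType) (U V W : zmodType)
  (aU : A -> U -> U) (aV : A -> V -> V) (aW : A -> W -> W) :
  in_add aU aV -> in_add aV aW -> in_add aU aW.
Proof.
move=> [n [i1 [p1 [[i1B i1Z] [p1B p1Z] pi1]]]] [k [i2 [p2 [[i2B i2Z] [p2B p2Z] pi2]]]].
exists #|{: 'I_n * 'I_k}|.
exists (fun u => [ffun x => i2 (i1 u (enum_val x).1) (enum_val x).2]).
exists (fun v => p1 [ffun a => p2 [ffun b => v (enum_rank (a, b))]]).
split.
- split.
  + move=> x y; apply/ffunP => z; rewrite !ffunE i1B ffB i2B ffB //.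
  + move=> a x; apply/ffunP => z; rewrite /act_pow !ffunE i1Z ffunE i2Z ffunE //.
- split.
  + move=> x y; rewrite -p1B; congr p1; apply/ffunP => a; rewrite !ffunE -p2B.
    by congr p2; apply/ffunP => b; rewrite !ffunE.
  + move=> a x; rewrite -p1Z; congr p1; apply/ffunP => c; rewrite /act_pow !ffunE -p2Z.
    by congr p2; apply/ffunP => b; rewrite !ffunE.
- move=> u; rewrite -[RHS]pi1; congr p1; apply/ffunP => a; rewrite !ffunE -[RHS]pi2.
  by congr p2; apply/ffunP => b; rewrite !ffunE enum_rankK.
Qed.

Lemma addf_sum (U V : zmodType) (f : U -> V) :
  (forall x y, f (x - y) = f x - f y) ->
  forall k (F : 'I_k -> U), f (\sum_(j < k) F j) = \sum_(j < k) f (F j).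
Proof.
move=> fB k F.
have f0 : f 0 = 0 by rewrite -(subrr 0) fB subrr.
have fN x : f (- x) = - f x by rewrite -sub0r fB f0 sub0r.
have fD x y : f (x + y) = f x + f y by rewrite -{1}(opprK y) fB fN opprK.
by apply: (big_morph f fD f0).
Qed.

Lemma restr_add (R S : pzRingType) (l : {rmorphism R -> S}) (M T : lmodType S) :
  in_add (fun s (m : M) => s *: m) (fun s (t : T) => s *: t) ->
  in_add (fun r (m : M) => l r *: m) (fun r (t : T) => l r *: t).
Proof.
move=> [n [i [p [[iB iZ] [pB pZ] pi]]]].
exists n, i, p; split => //; split => // r x; rewrite ?iZ ?pZ //.
Qed.

Lemma tens_add (R S : pzRingType) (l : {rmorphism R -> S})
  (omega : lmodType R) (T : lmodType S) (tau : S -> omega -> T) :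
  centrally_projective l -> is_tensor l tau ->
  in_add (fun r (t : T) => l r *: t) (fun r (w : omega) => r *: w).
Proof.
move=> [k [i [p [[iB iZ] [pB pZ] pi]]]] [[tB1 tB2 tZ] tS tU].
have iR s r : i (s * l r) = [ffun j => i s j * r].
  by have := iZ 1 r s; rewrite rmorph1 mul1r => ->; apply/ffunP => j; rewrite !ffunE mul1r.
have iL r s : i (l r * s) = [ffun j => r * i s j].
  by have := iZ r 1 s; rewrite rmorph1 mulr1 => ->; apply/ffunP => j; rewrite !ffunE mulr1.
pose b := fun s (w : omega) => [ffun j => i s j *: w] : {ffun 'I_k -> omega}.
have bb : balanced l b.
  split.
  - by move=> s s' w; apply/ffunP => j; rewrite ffB !ffunE iB ffB scalerBl.
  - by move=> s w w'; apply/ffunP => j; rewrite ffB !ffunE scalerBr.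
  - by move=> s r w; apply/ffunP => j; rewrite !ffunE iR ffunE scalerA.
have [I [IB Itau Iuniq]] := tU _ b bb.
pose delta (j : 'I_k) : {ffun 'I_k -> R} := [ffun x => ((x == j)%:R : R)].
pose P := fun v : {ffun 'I_k -> omega} => \sum_(j < k) tau (p (delta j)) (v j).
have PB : forall x y, P (x - y) = P x - P y.
  by move=> x y; rewrite /P -sumrB; apply: eq_bigr => j _; rewrite ffB tB2.
have tauS w : forall k' (F : 'I_k' -> S), tau (\sum_(j < k') F j) w = \sum_(j < k') tau (F j) w.
  by apply: (@addf_sum _ _ (fun s => tau s w)) => x y; rewrite tB1.
have pS := @addf_sum _ _ p pB.
exists k, I, P; split.
- split => // r t.
  have bb' : balanced l (fun s w => b (l r * s) w).
    case: bb => b1 b2 b3; split.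
    + by move=> s s' w; rewrite mulrBr b1.
    + by move=> s w w'; rewrite b2.
    + by move=> s r' w; rewrite mulrA b3.
  have [g [_ _ gU]] := tU _ _ bb'.
  rewrite (gU (fun t => I (l r *: t))) ?(gU (fun t => act_pow (fun r0 (w : omega) => r0 *: w) r (I t))) //.
  + by move=> x y; rewrite /act_pow IB; apply/ffunP => j; rewrite !ffunE ?ffB scalerBr.
  + move=> s w; rewrite /act_pow Itau; apply/ffunP => j; rewrite !ffunE iL ffunE scalerA //.
  + by move=> x y; rewrite scalerBr IB.
  + by move=> s w; rewrite -tS Itau.
- split => //.
  move=> r v; rewrite /act_pow /P scaler_sumr; apply: eq_bigr => j _.
  rewrite ffunE -tZ -tS; congr tau.
  have := pZ 1 r (delta j); have := pZ r 1 (delta j); rewrite rmorph1 mul1r mulr1 => <- <-.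
  by congr p; apply/ffunP => x; rewrite !ffunE mul1r mulr1 mulr_natl mulr_natr.
- move=> t.
  have bt : balanced l tau by split.
  have [g [_ _ gU]] := tU _ _ bt.
  have gid : forall t, t = g t by apply: (gU id).
  rewrite [RHS]gid; apply: (gU (fun t => P (I t))).
  + by move=> x y; rewrite IB PB.
  move=> s w; rewrite Itau /P.
  have -> : \sum_(j < k) tau (p (delta j)) (b s w j) = \sum_(j < k) tau (p (delta j) * l (i s j)) w.
    by apply: eq_bigr => j _; rewrite ffunE tZ.
  rewrite -tauS; congr tau.
  have -> : \sum_(j < k) p (delta j) * l (i s j) = \sum_(j < k) p [ffun x => 1 * delta j x * i s j].
    by apply: eq_bigr => j _; rewrite pZ rmorph1 mul1r.
  rewrite -pS -[RHS]pi; congr p; apply/ffunP => x; rewrite sum_ffunE.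
  rewrite (bigD1 x) //= !ffunE eqxx !mul1r big1 ?addr0 // => j /negbTE.
  by rewrite !ffunE eq_sym => ->; rewrite mul1r mul0r.
Qed.

Theorem lemma4p2 (R S : pzRingType) (l : {rmorphism R -> S})
  (omega : lmodType R) (M : lmodType S)
  (T : lmodType S) (tau : S -> omega -> T) :
  noetherian R -> noetherian S ->
  frobenius l -> centrally_projective l ->
  fin_gen omega ->
  is_tensor l tau ->
  in_add (fun s (m : M) => s *: m) (fun s (t : T) => s *: t) ->
  in_add (fun r (m : M) => l r *: m) (fun r (w : omega) => r *: w).
Proof.
move=> _ _ _ cp _ ten hM.
apply: add_trans; [exact: restr_add hM | exact: tens_add cp ten].
Qed.
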